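(* Let $M$ be a $4$-dimensional manifold with local coordinates $(x^1,\dots,x^4)$, $e_i=\partial/\partial x^i$, and Riemannian metric $g$ with components \[(g_{ij})=\begin{pmatrix} A&B&C&B\\ B&A&B&C\\ C&B&A&B\\ B&C&B&A\end{pmatrix},\] $A,B,C$ smooth functions with $A>C>B>0$. Let $P$ be the almost product structure with component matrix having rows $(0,0,1,0),(0,0,0,1),(1,0,0,0),(0,1,0,0)$. Then $(M,g,P)$ belongs to the class $\mathcal{W}_1$ if and only if \[(A+C)(B_4-B_2)=B(A_4-C_2+C_4-A_2),\qquad (A+C)(B_3-B_1)=B(A_3-C_1+C_3-A_1),\] where $A_i=\partial A/\partial x^i$, $B_i=\partial B/\partial x^i$, $C_i=\partial C/\partial x^i$.
   Context: Let $\nabla$ be the Levi-Civita connection of $g$, $F(x,y,z)=g((\nabla_xP)y,z)$, and $\theta(x)=g^{ij}F(e_i,e_j,x)$ with $(g^{ij})$ the inverse of $(g_{ij})$. The manifold $(M,g,P)$ belongs to the class $\mathcal{W}_1$ if for all vector fields $x,y,z$: \[F(x,y,z)=\tfrac14\big[g(x,y)\theta(z)+g(x,z)\theta(y)-g(x,Py)\theta(Pz)-g(x,Pz)\theta(Py)\big].\] *)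

(* Defs.v *)
From HB Require Import structures.
From mathcomp Require Import all_boot all_order all_algebra.
From mathcomp Require Import all_classical all_reals all_analysis.
Set Implicit Arguments. Unset Strict Implicit. Unset Printing Implicit Defensive.
Import Order.TTheory GRing.Theory Num.Theory.
Import numFieldNormedType.Exports.
Local Open Scope classical_set_scope.
Local Open Scope ring_scope.

Section Defs.
Variable R : realType.
Notation pt := 'rV[R]_4.

(* coordinate indices: x^1..x^4 are indices 0..3 of 'I_4 *)
Definition i1 : 'I_4 := @Ordinal 4 0 isT.
Definition i2 : 'I_4 := @Ordinal 4 1 isT.
Definition i3 : 'I_4 := @Ordinal 4 2 isT.
Definition i4 : 'I_4 := @Ordinal 4 3 isT.

Definition ev (i : 'I_4) : pt := delta_mx 0 i.

Definition pd (i : 'I_4) (f : pt -> R) : pt -> R := fun x => 'D_(ev i) f x.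

Fixpoint Ck (n : nat) (U : set pt) (f : pt -> R) : Prop :=
  match n with
  | 0 => forall x, U x -> {for x, continuous f}
  | n'.+1 => (forall x, U x -> differentiable f x) /\ (forall i, Ck n' U (pd i f))
  end.
Definition smooth_on (U : set pt) (f : pt -> R) : Prop := forall n, Ck n U f.

(* components g_ij of the metric:
   rows (A B C B), (B A B C), (C B A B), (B C B A) *)
Definition gc (A B C : pt -> R) (i j : 'I_4) : pt -> R :=
  if i == j then A else if odd (i + j) then B else C.
Definition gmx (A B C : pt -> R) (x : pt) : 'M[R]_4 := \matrix_(i, j) gc A B C i j x.
Definition ginv (A B C : pt -> R) (x : pt) : 'M[R]_4 := invmx (gmx A B C x).

Definition Pmx : 'M[R]_4 := \matrix_(i, j) (if (j : nat) == ((i + 2) %% 4)%N then 1 else 0).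

(* Christoffel symbols of the Levi-Civita connection: nabla_{e_i} e_j = sum_k Gam k i j e_k *)
Definition Gam (A B C : pt -> R) (x : pt) (k i j : 'I_4) : R :=
  2^-1 * \sum_(l < 4) ginv A B C x k l *
     (pd i (gc A B C j l) x + pd j (gc A B C i l) x - pd l (gc A B C i j) x).

(* components of (nabla_{e_i} P) e_j = nabla_{e_i}(P e_j) - P (nabla_{e_i} e_j),
   with P e_a = sum_b Pmx a b e_b *)
Definition nablaP (A B C : pt -> R) (x : pt) (i j l : 'I_4) : R :=
  \sum_(a < 4) Pmx j a * Gam A B C x l i a - \sum_(k < 4) Gam A B C x k i j * Pmx k l.

(* F(e_i,e_j,e_k) = g((nabla_{e_i} P) e_j, e_k) *)
Definition Fc (A B C : pt -> R) (x : pt) (i j k : 'I_4) : R :=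
  \sum_(l < 4) nablaP A B C x i j l * gc A B C l k x.

Definition gv (A B C : pt -> R) (x : pt) (u v : pt) : R :=
  \sum_(i < 4) \sum_(j < 4) u 0 i * v 0 j * gc A B C i j x.
Definition Pv (u : pt) : pt := u *m Pmx.
Definition Fv (A B C : pt -> R) (x : pt) (u v w : pt) : R :=
  \sum_(i < 4) \sum_(j < 4) \sum_(k < 4) u 0 i * v 0 j * w 0 k * Fc A B C x i j k.
Definition thetac (A B C : pt -> R) (x : pt) (k : 'I_4) : R :=
  \sum_(i < 4) \sum_(j < 4) ginv A B C x i j * Fc A B C x i j k.
Definition thetav (A B C : pt -> R) (x : pt) (w : pt) : R :=
  \sum_(k < 4) w 0 k * thetac A B C x k.

(* (M,g,P) in class W_1, M = the coordinate domain U *)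
Definition W1 (U : set pt) (A B C : pt -> R) : Prop :=
  forall x, U x -> forall u v w : pt,
    Fv A B C x u v w = 4^-1 * (gv A B C x u v * thetav A B C x w
                              + gv A B C x u w * thetav A B C x v
                              - gv A B C x u (Pv v) * thetav A B C x (Pv w)
                              - gv A B C x u (Pv w) * thetav A B C x (Pv v)).
End Defs.

(* Main.v *)
Require Import Defs.
From HB Require Import structures.
From mathcomp Require Import all_boot all_order all_algebra.
From mathcomp Require Import all_classical all_reals all_analysis.
From mathcomp Require Import ring lra.
Import Order.TTheory GRing.Theory Num.Theory.
Import numFieldNormedType.Exports.
Local Open Scope classical_set_scope.
Local Open Scope ring_scope.

Lemma ord4P (P : 'I_4 -> Prop) : P i1 -> P i2 -> P i3 -> P i4 -> forall i, P i.
Proof.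
move=> h1 h2 h3 h4 [[|[|[|[|n]]]] Hi];
  try (by rewrite (bool_irrelevance Hi isT)); by [].
Qed.

Lemma sum4 (R : realType) (F : 'I_4 -> R) : \sum_(i < 4) F i = F i1 + F i2 + F i3 + F i4.
Proof.
rewrite !big_ord_recr big_ord0 /= add0r.
by congr (F _ + F _ + F _ + F _); apply: val_inj.
Qed.

Definition pi4 (i : 'I_4) : 'I_4 :=
  match val i with 0 => i3 | 1 => i4 | 2 => i1 | _ => i2 end.

Lemma Pmx_E (R : realType) j a : (Pmx R) j a = (a == pi4 j)%:R.
Proof. rewrite mxE; move: j a; apply: ord4P; apply: ord4P; by []. Qed.

Definition ss {R : realType} (a b c : R) : R := (a + c) / ((a + c) ^+ 2 - 4 * b ^+ 2).
Definition pp {R : realType} (a b c : R) : R := 2^-1 * (ss a b c + (a - c)^-1).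
Definition rr {R : realType} (a b c : R) : R := 2^-1 * (ss a b c - (a - c)^-1).
Definition qq {R : realType} (a b c : R) : R := - b / ((a + c) ^+ 2 - 4 * b ^+ 2).
Definition invM {R : realType} (a b c : R) : 'M[R]_4 :=
  \matrix_(i, j) (if i == j then pp a b c else if odd (i + j) then qq a b c else rr a b c).

Lemma nz_facts {R : realType} {a b c : R} : c < a -> b < c -> 0 < b ->
  [/\ a - c != 0, (a + c) ^+ 2 - 4 * b ^+ 2 != 0 & a + c != 0].
Proof.
move=> h1 h2 h3; split; rewrite lt0r_neq0 //; try nra.
Qed.

Lemma gM1 {R : realType} (A B C : 'rV[R]_4 -> R) x :
  C x < A x -> B x < C x -> 0 < B x ->
  gmx A B C x *m invM (A x) (B x) (C x) = 1%:M.
Proof.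
move=> h1 h2 h3; have [n1 n2 n3] := nz_facts h1 h2 h3.
apply/matrixP => i j; rewrite !mxE sum4 !mxE.
move: i j; apply: ord4P; apply: ord4P; rewrite /gc /= /pp /rr /qq /ss; field; by rewrite ?n1 ?n2 ?n3.
Qed.

Lemma g_unit {R : realType} (A B C : 'rV[R]_4 -> R) x :
  C x < A x -> B x < C x -> 0 < B x -> gmx A B C x \in unitmx.
Proof. by move=> h1 h2 h3; have [] := mulmx1_unit (gM1 _ _ _ _ h1 h2 h3). Qed.

Lemma ginvE {R : realType} (A B C : 'rV[R]_4 -> R) x :
  C x < A x -> B x < C x -> 0 < B x ->
  ginv A B C x = invM (A x) (B x) (C x).
Proof.
move=> h1 h2 h3.
by rewrite /ginv -[invmx _]mulmx1 -(gM1 _ _ _ _ h1 h2 h3) mulKmx //; exact: (g_unit _ _ _ _ h1 h2 h3).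
Qed.

Lemma gsym {R : realType} (A B C : 'rV[R]_4 -> R) i j : gc A B C i j = gc A B C j i.
Proof. by rewrite /gc eq_sym addnC. Qed.

Definition Xf {R : realType} (A B C : 'rV[R]_4 -> R) x (i m n : 'I_4) : R :=
  pd i (gc A B C m n) x + pd m (gc A B C i n) x - pd n (gc A B C i m) x.

Lemma Gam_Xf {R : realType} (A B C : 'rV[R]_4 -> R) x k i j :
  Gam A B C x k i j = 2^-1 * \sum_(l < 4) ginv A B C x k l * Xf A B C x i j l.
Proof. by []. Qed.

Lemma pi4_1 : pi4 i1 = i3. Proof. by []. Qed.
Lemma pi4_2 : pi4 i2 = i4. Proof. by []. Qed.
Lemma pi4_3 : pi4 i3 = i1. Proof. by []. Qed.
Lemma pi4_4 : pi4 i4 = i2. Proof. by []. Qed.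

Lemma pd_gc {R : realType} (A B C : 'rV[R]_4 -> R) x i m n :
  pd i (gc A B C m n) x = gc (pd i A) (pd i B) (pd i C) m n x.
Proof. by rewrite /gc; case: (m == n) => //; case: (odd (m + n)). Qed.

Lemma Xf_E {R : realType} (A B C : 'rV[R]_4 -> R) x i m n :
  Xf A B C x i m n = gc (pd i A) (pd i B) (pd i C) m n x
     + gc (pd m A) (pd m B) (pd m C) i n x - gc (pd n A) (pd n B) (pd n C) i m x.
Proof. by rewrite /Xf !pd_gc. Qed.

Arguments pd : simpl never.
Arguments Xf : simpl never.
Arguments Gam : simpl never.
Arguments thetac : simpl never.
Arguments Fc : simpl never.
Arguments pp : simpl never.
Arguments qq : simpl never.
Arguments rr : simpl never.
Arguments ss : simpl never.

Lemma gGam {R : realType} (A B C : 'rV[R]_4 -> R) x k i m :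
  C x < A x -> B x < C x -> 0 < B x ->
  \sum_(l < 4) gc A B C l k x * Gam A B C x l i m = 2^-1 * Xf A B C x i m k.
Proof.
move=> h1 h2 h3.
under eq_bigr => l _ do rewrite Gam_Xf mulrCA mulr_sumr.
rewrite -mulr_sumr exchange_big /=; congr (_ * _).
transitivity (\sum_(n < 4) (gmx A B C x *m ginv A B C x) k n * Xf A B C x i m n).
  apply: eq_bigr => n _; rewrite mxE mulr_suml; apply: eq_bigr => l _.
  by rewrite mxE gsym mulrA.
rewrite /ginv mulmxV; last exact: (g_unit _ _ _ _ h1 h2 h3).
rewrite (bigD1 k) //= big1 ?addr0 => [|n nk]; rewrite !mxE.
  by rewrite eqxx mulr1n mul1r.
by rewrite eq_sym (negbTE nk) mulr0n mul0r.
Qed.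



Ltac gen_atoms :=
  repeat match goal with
  | |- context [pd ?i ?f ?y] => let t := fresh "d" in generalize (pd i f y) as t; intro t
  | |- context [pp ?a ?b ?c] => let t := fresh "p" in generalize (pp a b c) as t; intro t
  | |- context [qq ?a ?b ?c] => let t := fresh "q" in generalize (qq a b c) as t; intro t
  | |- context [rr ?a ?b ?c] => let t := fresh "r" in generalize (rr a b c) as t; intro t
  | |- context [Gam ?A ?B ?C ?y ?k ?i ?j] => let t := fresh "G" in generalize (Gam A B C y k i j) as t; intro t
  end.

Lemma sum44 (R : realType) (F : 'I_4 -> 'I_4 -> R) : \sum_(i<4) \sum_(j<4) F i j =
  F i1 i1 + F i1 i2 + F i1 i3 + F i1 i4 + (F i2 i1 + F i2 i2 + F i2 i3 + F i2 i4)
  + (F i3 i1 + F i3 i2 + F i3 i3 + F i3 i4) + (F i4 i1 + F i4 i2 + F i4 i3 + F i4 i4).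
Proof. by rewrite !sum4. Qed.

Lemma sumPl (R : realType) (j : 'I_4) (G : 'I_4 -> R) :
  \sum_(a < 4) Pmx R j a * G a = G (pi4 j).
Proof. rewrite sum4 !mxE; move: j; apply: ord4P; rewrite /=; ring. Qed.

Lemma sumPr (R : realType) (l : 'I_4) (G : 'I_4 -> R) :
  \sum_(k < 4) G k * Pmx R k l = G (pi4 l).
Proof. rewrite sum4 !mxE; move: l; apply: ord4P; rewrite /=; ring. Qed.

Lemma nablaP_E {R : realType} (A B C : 'rV[R]_4 -> R) x i j l :
  nablaP A B C x i j l = Gam A B C x l i (pi4 j) - Gam A B C x (pi4 l) i j.
Proof.
rewrite /nablaP; congr (_ - _).
  exact: (sumPl _ j (fun a => Gam A B C x l i a)).
exact: (sumPr _ l (fun k => Gam A B C x k i j)).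
Qed.

Lemma Fc_E {R : realType} (A B C : 'rV[R]_4 -> R) x i j k :
  C x < A x -> B x < C x -> 0 < B x ->
  Fc A B C x i j k = 2^-1 * (Xf A B C x i (pi4 j) k - Xf A B C x i j (pi4 k)).
Proof.
move=> h1 h2 h3; rewrite /Fc.
under eq_bigr => l _ do rewrite nablaP_E mulrBl.
rewrite sumrB.
have e2 : \sum_(l < 4) Gam A B C x (pi4 l) i j * gc A B C l k x = 2^-1 * Xf A B C x i j (pi4 k).
  rewrite -gGam // !sum4; move: k; apply: ord4P; rewrite /gc /=; ring.
have e1 : \sum_(l < 4) Gam A B C x l i (pi4 j) * gc A B C l k x = 2^-1 * Xf A B C x i (pi4 j) k.
  by rewrite -gGam //; apply: eq_bigr => l _; rewrite mulrC.
rewrite e1 e2; ring.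
Qed.

Definition th1 {R : realType} (A B C : 'rV[R]_4 -> R) x :=
  let a := A x in let b := B x in let c := C x in
  2 * (pp a b c * (pd i3 A x - pd i1 C x) + rr a b c * (pd i3 C x - pd i1 A x))
  + 4 * qq a b c * (pd i3 B x - pd i1 B x).
Definition th2 {R : realType} (A B C : 'rV[R]_4 -> R) x :=
  let a := A x in let b := B x in let c := C x in
  2 * (pp a b c * (pd i4 A x - pd i2 C x) + rr a b c * (pd i4 C x - pd i2 A x))
  + 4 * qq a b c * (pd i4 B x - pd i2 B x).

Definition th3 {R : realType} (A B C : 'rV[R]_4 -> R) x :=
  let a := A x in let b := B x in let c := C x in
  2 * (pp a b c * (pd i1 A x - pd i3 C x) + rr a b c * (pd i1 C x - pd i3 A x))
  - 4 * qq a b c * (pd i3 B x - pd i1 B x).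
Definition th4 {R : realType} (A B C : 'rV[R]_4 -> R) x :=
  let a := A x in let b := B x in let c := C x in
  2 * (pp a b c * (pd i2 A x - pd i4 C x) + rr a b c * (pd i2 C x - pd i4 A x))
  - 4 * qq a b c * (pd i4 B x - pd i2 B x).

Lemma theta_E {R : realType} (A B C : 'rV[R]_4 -> R) x :
  C x < A x -> B x < C x -> 0 < B x ->
  [/\ thetac A B C x i1 = th1 A B C x, thetac A B C x i2 = th2 A B C x,
      thetac A B C x i3 = th3 A B C x & thetac A B C x i4 = th4 A B C x].
Proof.
move=> h1 h2 h3; rewrite /thetac ginvE // !sum44 !mxE !Fc_E // ?pi4_1 ?pi4_2 ?pi4_3 ?pi4_4 !Xf_E /gc /= /th1 /th2 /th3 /th4 /=.
split; gen_atoms; field; done.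
Qed.



Lemma sum444 (R : realType) (F : 'I_4 -> 'I_4 -> 'I_4 -> R) :
  \sum_(i<4) \sum_(j<4) \sum_(k<4) F i j k =
  (F i1 i1 i1 + F i1 i1 i2 + F i1 i1 i3 + F i1 i1 i4 + F i1 i2 i1 + F i1 i2 i2 + F i1 i2 i3 + F i1 i2 i4 + F i1 i3 i1 + F i1 i3 i2 + F i1 i3 i3 + F i1 i3 i4 + F i1 i4 i1 + F i1 i4 i2 + F i1 i4 i3 + F i1 i4 i4)
  + (F i2 i1 i1 + F i2 i1 i2 + F i2 i1 i3 + F i2 i1 i4 + F i2 i2 i1 + F i2 i2 i2 + F i2 i2 i3 + F i2 i2 i4 + F i2 i3 i1 + F i2 i3 i2 + F i2 i3 i3 + F i2 i3 i4 + F i2 i4 i1 + F i2 i4 i2 + F i2 i4 i3 + F i2 i4 i4)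
  + (F i3 i1 i1 + F i3 i1 i2 + F i3 i1 i3 + F i3 i1 i4 + F i3 i2 i1 + F i3 i2 i2 + F i3 i2 i3 + F i3 i2 i4 + F i3 i3 i1 + F i3 i3 i2 + F i3 i3 i3 + F i3 i3 i4 + F i3 i4 i1 + F i3 i4 i2 + F i3 i4 i3 + F i3 i4 i4)
  + (F i4 i1 i1 + F i4 i1 i2 + F i4 i1 i3 + F i4 i1 i4 + F i4 i2 i1 + F i4 i2 i2 + F i4 i2 i3 + F i4 i2 i4 + F i4 i3 i1 + F i4 i3 i2 + F i4 i3 i3 + F i4 i3 i4 + F i4 i4 i1 + F i4 i4 i2 + F i4 i4 i3 + F i4 i4 i4).
Proof. rewrite sum44 !sum4; ring. Qed.

Definition Tc {R : realType} (A B C : 'rV[R]_4 -> R) x (i j k : 'I_4) : R :=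
  4^-1 * (gc A B C i j x * thetac A B C x k + gc A B C i k x * thetac A B C x j
          - gc A B C i (pi4 j) x * thetac A B C x (pi4 k)
          - gc A B C i (pi4 k) x * thetac A B C x (pi4 j)).

Lemma core_back {R : realType} (A B C : 'rV[R]_4 -> R) x :
  C x < A x -> B x < C x -> 0 < B x ->
  (A x + C x) * (pd i4 B x - pd i2 B x)
        = B x * (pd i4 A x - pd i2 C x + pd i4 C x - pd i2 A x) ->
  (A x + C x) * (pd i3 B x - pd i1 B x)
        = B x * (pd i3 A x - pd i1 C x + pd i3 C x - pd i1 A x) ->
  forall i j k, Fc A B C x i j k = Tc A B C x i j k.
Proof.
move=> h1 h2 h3 E1 E2; have [n1 n2 n3] := nz_facts h1 h2 h3.
have [t1 t2 t3 t4] := theta_E _ _ _ _ h1 h2 h3.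
have eB4 : pd i4 B x = pd i2 B x + B x * (pd i4 A x - pd i2 C x + pd i4 C x - pd i2 A x) / (A x + C x).
  by rewrite -E1; field.
have eB3 : pd i3 B x = pd i1 B x + B x * (pd i3 A x - pd i1 C x + pd i3 C x - pd i1 A x) / (A x + C x).
  by rewrite -E2; field.
move=> i j k; rewrite Fc_E //; move: i j k.
apply: ord4P; apply: ord4P; apply: ord4P;
rewrite /Tc ?pi4_1 ?pi4_2 ?pi4_3 ?pi4_4 !Xf_E /gc /= ?t1 ?t2 ?t3 ?t4 /th1 /th2 /th3 /th4 /=;
rewrite ?eB4 ?eB3 /pp /qq /rr /ss; gen_atoms; field; by rewrite ?n1 ?n2 ?n3.
Qed.

Ltac gen_atoms2 :=
  repeat match goal with
  | |- context [thetac ?A ?B ?C ?y ?k] => let t := fresh "th" in generalize (thetac A B C y k) as t; intro t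
  end.

Lemma core_fwd {R : realType} (A B C : 'rV[R]_4 -> R) x :
  C x < A x -> B x < C x -> 0 < B x ->
  Fc A B C x i2 i2 i2 - Tc A B C x i2 i2 i2 =
    2 * B x / ((A x + C x) ^+ 2 - 4 * B x ^+ 2) *
    ((A x + C x) * (pd i4 B x - pd i2 B x) - B x * (pd i4 A x - pd i2 C x + pd i4 C x - pd i2 A x))
  /\
  Fc A B C x i1 i1 i1 - Tc A B C x i1 i1 i1 =
    2 * B x / ((A x + C x) ^+ 2 - 4 * B x ^+ 2) *
    ((A x + C x) * (pd i3 B x - pd i1 B x) - B x * (pd i3 A x - pd i1 C x + pd i3 C x - pd i1 A x)).
Proof.
move=> h1 h2 h3; have [n1 n2 n3] := nz_facts h1 h2 h3.
have [t1 t2 t3 t4] := theta_E _ _ _ _ h1 h2 h3.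
rewrite !Fc_E //; split;
rewrite /Tc ?pi4_1 ?pi4_2 ?pi4_3 ?pi4_4 !Xf_E /gc /= ?t1 ?t2 ?t3 ?t4 /th1 /th2 /th3 /th4 /=;
rewrite /pp /qq /rr /ss; gen_atoms; field; by rewrite ?n1 ?n2 ?n3.
Qed.

Lemma ev_E (R : realType) i j : (@ev R i) 0 j = (j == i)%:R.
Proof. by rewrite /ev mxE eqxx. Qed.

Lemma Fv_ev (R : realType) (F : 'I_4 -> 'I_4 -> 'I_4 -> R) a :
  \sum_(i<4) \sum_(j<4) \sum_(k<4) (@ev R a) 0 i * (@ev R a) 0 j * (@ev R a) 0 k * F i j k = F a a a.
Proof. rewrite sum444 !ev_E; move: a; apply: ord4P; rewrite /=; ring. Qed.

Lemma rhs_E {R : realType} (A B C : 'rV[R]_4 -> R) x (u v w : 'rV[R]_4) :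
  4^-1 * (gv A B C x u v * thetav A B C x w + gv A B C x u w * thetav A B C x v
          - gv A B C x u (Pv v) * thetav A B C x (Pv w)
          - gv A B C x u (Pv w) * thetav A B C x (Pv v))
  = \sum_(i<4) \sum_(j<4) \sum_(k<4) u 0 i * v 0 j * w 0 k * Tc A B C x i j k.
Proof.
rewrite sum444 /Tc ?pi4_1 ?pi4_2 ?pi4_3 ?pi4_4 /gv /thetav /Pv !sum44 !sum4 !mxE !sum4 !mxE /= /gc /=.
gen_atoms2; field; done.
Qed.

Theorem theorem3p5 (R : realType) (U : set 'rV[R]_4) (A B C : 'rV[R]_4 -> R) :
  open U ->
  smooth_on U A -> smooth_on U B -> smooth_on U C ->
  (forall x, U x -> [/\ C x < A x, B x < C x & 0 < B x]) ->
  (W1 U A B C <->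
   (forall x, U x ->
      (A x + C x) * (pd i4 B x - pd i2 B x)
        = B x * (pd i4 A x - pd i2 C x + pd i4 C x - pd i2 A x)
   /\ (A x + C x) * (pd i3 B x - pd i1 B x)
        = B x * (pd i3 A x - pd i1 C x + pd i3 C x - pd i1 A x))).
Proof.
move=> oU sA sB sC hyp; split.
  move=> HW x Ux; have [h1 h2 h3] := hyp x Ux.
  have [n1 n2 n3] := nz_facts h1 h2 h3.
  have [f2 f1] := core_fwd _ _ _ _ h1 h2 h3.
  have H2 := HW x Ux (@ev R i2) (@ev R i2) (@ev R i2).
  have H1 := HW x Ux (@ev R i1) (@ev R i1) (@ev R i1).
  rewrite rhs_E /Fv !Fv_ev in H2; rewrite rhs_E /Fv !Fv_ev in H1.
  rewrite H2 subrr in f2; rewrite H1 subrr in f1.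
  have a0 : 2 * B x / ((A x + C x) ^+ 2 - 4 * B x ^+ 2) != 0.
    apply: lt0r_neq0; apply: divr_gt0; nra.
  split; apply/eqP; rewrite -subr_eq0; apply/eqP.
    by move/esym/eqP: f2; rewrite mulf_eq0 (negbTE a0) /= => /eqP.
  by move/esym/eqP: f1; rewrite mulf_eq0 (negbTE a0) /= => /eqP.
move=> HE x Ux u v w; have [h1 h2 h3] := hyp x Ux; have [E1 E2] := HE x Ux.
rewrite rhs_E /Fv; apply: eq_bigr => i _; apply: eq_bigr => j _; apply: eq_bigr => k _.
by rewrite (core_back _ _ _ _ h1 h2 h3 E1 E2).
Qed.
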